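(* Under the standing assumptions, let $u\in X\setminus\{0\}$ and $\zeta\in X^*$. Then $u$ is a $p$-eigenvector of $J$ with subgradient $\zeta$ (and eigenvalue $\lambda=R(u)$) if and only if all of the following hold: (i) $\zeta\in\partial J(u)$; (ii) $\langle\zeta,u-v\rangle\ge0$ for all $v\in X$ with $|v|_H\le|u|_H$; (iii) $|\zeta|_{H^*}\,|u|_H=pJ(u)$. Moreover, condition (ii) implies $\langle\zeta,u\rangle=|\zeta|_{H^*}|u|_H$.
   Context: Standing assumptions: $X$ is a real reflexive Banach space with dual $X^*$ and duality pairing $\langle\cdot,\cdot\rangle$; $\Gamma_0(X)$ is the class of proper, lower semi-continuous, convex functionals $X\to\mathbb{R}\cup\{+\infty\}$. Fix $1<p<\infty$ and $q=\frac{p}{p-1}$. Let $J\in\Gamma_0(X)$, and let $H\in\Gamma_0(X)$ be absolutely $p$-homogeneous ($H(tu)=|t|^pH(u)$) such that $|u|_H:=(pH(u))^{1/p}$ is a norm on $X$, so $H(u)=\frac1p|u|_H^p$. The dual norm is $|\zeta|_{H^*}=\sup_{u\ne0}\langle\zeta,u\rangle/|u|_H$, and $H^*(\zeta)=\frac1q|\zeta|_{H^*}^q$. The subdifferential is $\partial J(u)=\{\zeta\in X^*:\ J(u)+\langle\zeta,v-u\rangle\le J(v)\ \forall v\in X\}$. Growth assumption: there is $c>0$ with $H(u)\le cJ(u)$ for all $u\in X$. The Rayleigh quotient is $R(u)=J(u)/H(u)$ for $u\ne0$. A $p$-eigenvector of $J$: $u\in X\setminus\{0\}$ with subgradient $\zeta\in\partial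 J(u)$ and eigenvalue $\lambda=R(u)\in\mathbb{R}$ such that $\zeta\in\lambda\,\partial H(u)$. *)

(* Defs.v *)
From HB Require Import structures.
From mathcomp Require Import all_boot all_order all_algebra.
From mathcomp Require Import all_classical all_reals all_analysis.
Set Implicit Arguments. Unset Strict Implicit. Unset Printing Implicit Defensive.
Import Order.TTheory GRing.Theory Num.Theory.
Import numFieldNormedType.Exports.
Local Open Scope classical_set_scope.
Local Open Scope ring_scope.

Section Defs.
Context {R : realType} {X : completeNormedModType R}.

(* Elements of the topological dual X^*: continuous linear functionals X -> R;
   the duality pairing <zeta, x> is application zeta x. *)
Definition is_dual (f : X -> R) : Prop :=
  (forall (a : R) (x y : X), f (a *: x + y) = a * f x + f y) /\ continuous f.

Definition dual_opnorm (f : X -> R) : \bar R :=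
  ereal_sup [set (`|f x|)%:E | x in [set x : X | `|x| <= 1]].

Definition reflexive_space : Prop :=
  forall Phi : (X -> R) -> R,
    (forall (a : R) (f g : X -> R), is_dual f -> is_dual g ->
        Phi (fun x => a * f x + g x) = a * Phi f + Phi g) ->
    (exists C : R, forall f, is_dual f -> `|Phi f| <= C * fine (dual_opnorm f)) ->
    exists x : X, forall f, is_dual f -> Phi f = f x.

Definition proper (F : X -> \bar R) : Prop :=
  (forall x, (-oo < F x)%E) /\ exists x, (F x < +oo)%E.

Definition convex_fun (F : X -> \bar R) : Prop :=
  forall (x y : X) (t : R), 0 < t < 1 ->
    (F (t *: x + (1 - t) *: y)%R <= t%:E * F x + (1 - t)%:E * F y)%E.

Definition Gamma0 (F : X -> \bar R) : Prop :=
  proper F /\ lower_semicontinuous F /\ convex_fun F.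

Definition abs_p_homogeneous (p : R) (H : X -> \bar R) : Prop :=
  forall (t : R) (u : X), H (t *: u) = ((`|t| `^ p)%:E * H u)%E.

Definition Hnorm (p : R) (H : X -> \bar R) (u : X) : R :=
  (p * fine (H u)) `^ (p^-1).

Definition is_norm (N : X -> R) : Prop :=
  (forall u, 0 <= N u) /\ (forall u, N u = 0 -> u = 0) /\
  (forall (t : R) u, N (t *: u) = `|t| * N u) /\
  (forall u v, N (u + v) <= N u + N v).

Definition Hdualnorm (p : R) (H : X -> \bar R) (zeta : X -> R) : \bar R :=
  ereal_sup [set (zeta u / Hnorm p H u)%:E | u in [set u : X | u != 0]].

Definition subdiff (F : X -> \bar R) (u : X) (zeta : X -> R) : Prop :=
  is_dual zeta /\ forall v : X, (F u + (zeta (v - u))%:E <= F v)%E.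

Definition rayleigh (J H : X -> \bar R) (u : X) : \bar R :=
  (J u * ((fine (H u))^-1)%:E)%E.

Definition p_eigenvector (J H : X -> \bar R) (u : X) (zeta : X -> R) : Prop :=
  u != 0 /\ subdiff J u zeta /\
  exists lambda : R, rayleigh J H u = lambda%:E /\
    exists eta : X -> R, subdiff H u eta /\ zeta = (fun x => lambda * eta x).

End Defs.

(* Main.v *)
Require Import Defs.
From HB Require Import structures.
From mathcomp Require Import all_boot all_order all_algebra.
From mathcomp Require Import all_classical all_reals all_analysis.
From mathcomp Require Import ring lra.
Import Order.TTheory GRing.Theory Num.Theory.
Import numFieldNormedType.Exports.
Local Open Scope classical_set_scope.
Local Open Scope ring_scope.

Section L.
Context {R : realType} {X : completeNormedModType R}.

Lemma dual0 (f : X -> R) : is_dual f -> f 0 = 0.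
Proof.
move=> [hl _]; have := hl 1 0 0; rewrite scale1r addr0 mul1r => h.
by have := congr1 (fun x => x - f 0) h; rewrite addrK subrr.
Qed.

Lemma dualZ (f : X -> R) a x : is_dual f -> f (a *: x) = a * f x.
Proof. move=> hf; have := hf.1 a x 0; by rewrite addr0 dual0 // addr0. Qed.

Lemma dualD (f : X -> R) x y : is_dual f -> f (x + y) = f x + f y.
Proof. move=> hf; have := hf.1 1 x y; by rewrite scale1r mul1r. Qed.

Lemma dualB (f : X -> R) x y : is_dual f -> f (x - y) = f x - f y.
Proof.
move=> hf; rewrite dualD // -scaleN1r dualZ //; by rewrite mulN1r.
Qed.

Lemma tangent_slope (h e p : R) : 0 < h -> 1 < p ->
  (forall t : R, 0 < t -> h + (t - 1) * e <= t `^ p * h) -> e = p * h.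
Proof.
move=> h0 p1 H.
pose f := (h \*: (@powR R ^~ p) - e \*: (@id R)) : R -> R.
have der : forall t : R, 0 < t -> is_derive t 1 f (h *: (p * t `^ (p - 1)) - e *: 1).
  move=> t t0; rewrite /f.
  apply: (@is_deriveB R R R).
  exact: (@is_deriveZ R R R _ h t 1 _ (@is_derive1_powR R p t t0)).
have fE t : f t = h * t `^ p - e * t by [].
have dv t : t \in `]0, 2[ -> derivable f t 1.
  by rewrite in_itv/= => /andP[t0 _]; have := der t t0; case.
have min1 : forall t, t \in `]0, 2[ -> f 1 <= f t.
  move=> t; rewrite in_itv/= => /andP[t0 _]; rewrite !fE powR1.
  have := H t t0; lra.
have c1 : (1:R) \in `]0, 2[ by rewrite in_itv/=; apply/andP; split; lra.
have d0 := @derive1_at_min R f 0 2 1 (ler0n _ 2) dv c1 min1.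
have := @derive_val _ _ _ _ _ _ _ d0.
have d1 := der 1 ltr01; rewrite derive_val powR1.
rewrite /GRing.scale /= mulr1 => /eqP; rewrite subr_eq0 => /eqP.
by rewrite mulr1 mulrC => ->.
Qed.

Lemma H_ge0 (p : R) (H : X -> \bar R) : 0 < p -> Gamma0 H -> abs_p_homogeneous p H ->
  (forall u, H u \is a fin_num) -> forall v, 0 <= fine (H v).
Proof.
move=> p0 [_ [_ cvx]] hom fin v.
have hE w : H w = (fine (H w))%:E by rewrite fineK.
have H0 : fine (H 0) = 0.
  have := hom 0 v; rewrite scale0r normr0 powR0 ?gt_eqF// mul0e.
  by move=> ->.
have HN : fine (H (- v)) = fine (H v).
  have := hom (-1) v; rewrite scaleN1r normrN1 powR1 mul1e.
  by move=> ->.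
have h2 : 0 < (2^-1 : R) < 1 by apply/andP; split; lra.
have := cvx v (- v) _ h2.
have -> : 2^-1 *: v + (1 - 2^-1) *: - v = 0 :> X.
  have -> : (1 - 2^-1 : R) = 2^-1 by lra.
  by rewrite scalerN subrr.
rewrite (hE 0) (hE v) (hE (-v)) H0 HN -!EFinM -EFinD lee_fin.
lra.
Qed.

Lemma HnormE (p : R) (H : X -> \bar R) v : 0 < p -> 0 <= fine (H v) ->
  Hnorm p H v `^ p = p * fine (H v).
Proof.
move=> p0 hv; rewrite /Hnorm -powRrM mulVf ?gt_eqF// powRr1//.
by rewrite mulr_ge0// ltW.
Qed.

Lemma key_ineq (N : X -> R) (zeta : X -> R) (u : X) :
  is_norm N -> is_dual zeta -> 0 < N u ->
  (forall v : X, N v <= N u -> 0 <= zeta (u - v)) ->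
  forall v, zeta v * N u <= zeta u * N v.
Proof.
move=> [Nge0 [Nz [NZ _]]] dz Nu0 ii v.
have [->|v0] := eqVneq v 0.
  rewrite dual0// mul0r.
  have -> : N 0 = 0 by have := NZ 0 u; rewrite scale0r normr0 mul0r.
  by rewrite mulr0.
have Nv0 : 0 < N v.
  rewrite lt_neqAle Nge0 andbT; apply/eqP => /esym /Nz; exact/eqP.
have := ii ((N u / N v) *: v).
rewrite NZ ger0_norm; last by rewrite divr_ge0// ltW.
rewrite divfK ?gt_eqF// lexx => /(_ isT).
rewrite dualB// dualZ// subr_ge0 mulrAC ler_pdivrMr//.
by rewrite mulrC.
Qed.

Lemma moreover_lem (p : R) (H : X -> \bar R) (zeta : X -> R) (u : X) :
  is_norm (Hnorm p H) -> is_dual zeta -> 0 < Hnorm p H u ->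
  (forall v : X, Hnorm p H v <= Hnorm p H u -> 0 <= zeta (u - v)) ->
  Hdualnorm p H zeta = (zeta u / Hnorm p H u)%:E.
Proof.
move=> nrm dz Nu0 ii.
have key := @key_ineq _ _ _ nrm dz Nu0 ii.
have [Nge0 [Nz _]] := nrm.
apply/eqP; rewrite eq_le; apply/andP; split.
  apply: ge_ereal_sup => _ [w /= w0 <-]; rewrite lee_fin.
  have Nw0 : 0 < Hnorm p H w.
    rewrite lt_neqAle Nge0 andbT; apply/eqP => /esym /Nz; exact/eqP.
  rewrite ler_pdivrMr// mulrAC ler_pdivlMr//; exact: key.
apply: ereal_sup_ubound; exists u => //=.
apply/eqP => u0; move: Nu0; rewrite u0.
have -> : Hnorm p H 0 = 0 by have := nrm.2.2.1 0 u; rewrite scale0r normr0 mul0r.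
by rewrite ltxx.
Qed.
End L.

Theorem proposition2p5 (R : realType) (X : completeNormedModType R)
  (p : R) (J H : X -> \bar R) :
  @reflexive_space R X ->
  1 < p ->
  Gamma0 J ->
  Gamma0 H ->
  abs_p_homogeneous p H ->
  (forall u, H u \is a fin_num) ->
  is_norm (Hnorm p H) ->
  (exists c : R, 0 < c /\ forall u, (H u <= c%:E * J u)%E) ->
  forall (u : X) (zeta : X -> R), u != 0 -> is_dual zeta ->
  (p_eigenvector J H u zeta <->
     [/\ subdiff J u zeta,
         (forall v : X, Hnorm p H v <= Hnorm p H u -> 0 <= zeta (u - v)) &
         (Hdualnorm p H zeta * (Hnorm p H u)%:E = p%:E * J u)%E ])
  /\ ((forall v : X, Hnorm p H v <= Hnorm p H u -> 0 <= zeta (u - v)) ->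
      (zeta u)%:E = (Hdualnorm p H zeta * (Hnorm p H u)%:E)%E).
Proof.
move=> _ p1 GJ GH hom fin nrm [c [c0 Hc]] u zeta u0 dz.
have p0 : 0 < p by lra.
set N := Hnorm p H.
pose h v := fine (H v).
have hE v : H v = (h v)%:E by rewrite /h fineK.
have hge0 : forall v, 0 <= h v := @H_ge0 _ _ p H p0 GH hom fin.
have NE v : N v `^ p = p * h v := @HnormE _ _ p H v p0 (hge0 v).
have [Nge0 [Nz [NZ Ntri]]] := nrm.
have Nu0 : 0 < N u.
  rewrite lt_neqAle Nge0 andbT; apply/eqP => /esym /Nz; exact/eqP.
have hu0 : 0 < h u.
  have := powR_gt0 p Nu0; rewrite NE pmulr_rgt0//.
have moreover : (forall v : X, N v <= N u -> 0 <= zeta (u - v)) ->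
    (zeta u)%:E = (Hdualnorm p H zeta * (N u)%:E)%E.
  move=> ii; rewrite (@moreover_lem _ _ p H zeta u nrm dz Nu0 ii) -EFinM divfK// gt_eqF//.
have Jfin : subdiff J u zeta -> J u = (fine (J u))%:E.
  move=> [_ sJ]; have [[Jninf [x0 Jx0]] _] := GJ.
  have := sJ x0; have := Jninf u.
  case: (J u) => [r| |] //= _ Hle.
  by move: Hle; rewrite leye_eq => /eqP Jy; move: Jx0; rewrite Jy ltxx.
have Jpos : forall j, J u = j%:E -> 0 < j.
  move=> j Ju; have := Hc u; rewrite hE Ju -EFinM lee_fin => hle.
  have : 0 < c * j by apply: lt_le_trans hle.
  by rewrite pmulr_rgt0.
split; last exact: moreover.
split.
- move=> [_ [sJ [lam [rl [eta [[deta sH] zE]]]]]].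
  have Ju := Jfin sJ; set j := fine (J u) in Ju.
  have j0 := Jpos j Ju.
  have lamE : lam = j / h u.
    move: rl; rewrite /rayleigh Ju -/(h u) -EFinM; by case.
  have lam0 : 0 < lam by rewrite lamE divr_gt0.
  have etau : eta u = p * h u.
    apply: tangent_slope => // t t0.
    have := sH (t *: u); rewrite hom (hE u) -EFinM -EFinD lee_fin.
    by rewrite dualB// dualZ// gtr0_norm// mulrBl mul1r.
  have ii : forall v : X, N v <= N u -> 0 <= zeta (u - v).
    move=> v Nvu; rewrite zE; apply: mulr_ge0; first exact: ltW.
    have hvu : h v <= h u.
      have : N v `^ p <= N u `^ p by apply: ge0_ler_powR => //; [exact: ltW|rewrite nnegrE|rewrite nnegrE].
      by rewrite !NE ler_pM2l.
    have := sH v; rewrite (hE u) (hE v) -EFinD lee_fin (dualB _ _ _ deta) => hle.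
    rewrite (dualB _ _ _ deta); lra.
  split => //.
  rewrite -(moreover ii) zE /= etau lamE Ju -EFinM; congr (_%:E).
  by field; rewrite gt_eqF.
- move=> [sJ ii iii].
  have Ju := Jfin sJ; set j := fine (J u) in Ju.
  have j0 := Jpos j Ju.
  have zu : zeta u = p * j.
    by move: iii; rewrite -(moreover ii) Ju -EFinM; case.
  have key := @key_ineq _ _ _ _ u nrm dz Nu0 ii.
  pose lam := j / h u.
  have lam0 : 0 < lam by rewrite divr_gt0.
  split => //; split => //; exists lam; split.
    by rewrite /rayleigh Ju -EFinM.
  exists (fun x => lam^-1 * zeta x); split; last first.
    by apply: funext => x; rewrite mulrA mulfV ?gt_eqF// mul1r.
  split.
    split.
      by move=> a x y; rewrite dz.1 mulrDr mulrCA.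
    move=> x; apply: cvgM; first exact: cvg_cst.
    exact: dz.2.
  move=> v; rewrite (hE u) (hE v) -EFinD lee_fin dualB// zu.
  pose A := N u `^ (p - 1).
  have NuA : N u * A = p * h u by rewrite /A mulr_powRB1 ?NE// ltW.
  have linv : lam^-1 * (p * j) = p * h u.
    by rewrite /lam invf_div; field; rewrite gt_eqF.
  have zvb : lam^-1 * zeta v <= A * N v.
    suff : lam^-1 * zeta v * N u <= A * N v * N u by rewrite ler_pM2r.
    have := key v; rewrite zu => k.
    rewrite -mulrA (le_trans (ler_wpM2l (ltW (eqbRL (invr_gt0 lam) lam0)) k))//.
    rewrite mulrA linv -NuA.
    have -> : A * N v * N u = N u * A * N v by ring.
    by [].
  pose q := p / (p - 1).
  have q0 : 0 < q by rewrite divr_gt0// subr_gt0.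
  have pq : p^-1 + q^-1 = 1 by rewrite /q invf_div; field; rewrite ?gt_eqF// subr_eq0 gt_eqF.
  have young := conjugate_powR (Nge0 v) (powR_ge0 (N u) (p - 1)) p0 q0 pq.
  have Aq : A `^ q = p * h u.
    by rewrite /A -powRrM /q mulrC divfK ?NE// subr_eq0 gt_eqF.
  rewrite -/A Aq NE in young.
  have e1 : p * h v / p = h v by field; rewrite gt_eqF.
  have e2 : p * h u / q = (p - 1) * h u.
    by rewrite /q invf_div; field; rewrite ?gt_eqF// subr_eq0 gt_eqF.
  rewrite e1 e2 in young.
  rewrite mulrBr linv.
  have : N v * A = A * N v by rewrite mulrC.
  move=> e3; move: young zvb; rewrite e3 mulrBl mul1r; lra.
Qed.
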